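(* Let $p_0=1$, $p_1=1$, $p_2=2$ and $p_n=2p_{n-1}+p_{n-2}$ for $n\ge 3$. Then $|S_n(123,2143,3214)|=p_n$ for all $n\ge0$; equivalently $$\sum_{n\ge0}|S_n(123,2143,3214)|\,x^n=\frac{1-x-x^2}{1-2x-x^2}.$$ *)

(* Defs.v *)
From mathcomp Require Import all_boot all_order all_fingroup.
Set Implicit Arguments. Unset Strict Implicit. Unset Printing Implicit Defensive.

(* A pattern is given as a word, e.g. [:: 1; 2; 3] for 123.
   A permutation s of {0,...,n-1} (written in one-line notation
   s 0, s 1, ..., s (n-1)) contains the pattern q if there are indices
   f 0 < f 1 < ... < f (k-1) (k = size q) such that the subsequence
   s (f 0), ..., s (f (k-1)) is order-isomorphic to q. *)
Definition contains_pattern (n : nat) (s : 'S_n) (q : seq nat) : bool :=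
  [exists f : {ffun 'I_(size q) -> 'I_n},
     [forall a : 'I_(size q), forall b : 'I_(size q),
        ((a < b)%N ==> (f a < f b)%N) &&
        ((s (f a) < s (f b))%N == (nth 0 q a < nth 0 q b)%N)]].

Definition avoids (n : nat) (s : 'S_n) (q : seq nat) : bool :=
  ~~ contains_pattern s q.

Definition S_123_2143_3214 (n : nat) : {set 'S_n} :=
  [set s : 'S_n | [&& avoids s [:: 1; 2; 3],
                      avoids s [:: 2; 1; 4; 3] & avoids s [:: 3; 2; 1; 4]]].

Fixpoint pseq (n : nat) : nat :=
  match n with
  | 0 => 1
  | S n1 =>
    match n1 with
    | 0 => 1
    | S n2 =>
      match n2 with
      | 0 => 2
      | S _ => 2 * pseq n1 + pseq n2
      end
    end
  end.

Example pseq_test : map pseq (iota 0 6) = [:: 1; 1; 2; 5; 12; 29]. Proof. by []. Qed.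

(* Main.v *)
Require Import Defs.
From mathcomp Require Import all_boot all_order all_fingroup zify.
Set Implicit Arguments. Unset Strict Implicit. Unset Printing Implicit Defensive.

Lemma subseq_nth_idx (l : seq nat) (idx : seq nat) :
  sorted ltn idx -> all (fun i => i < size l) idx ->
  subseq (map (nth 0 l) idx) l.
Proof.
elim: l idx => [|x l IH] idx.
  by case: idx => [|i r] //= _ /andP[].
case: idx => [|i r] // Hs; rewrite [all _ _]/= => /andP[Hi Ha].
have Hsp : pairwise ltn (i :: r) by rewrite -(sorted_pairwise ltn_trans).
have Hpos : all (fun j => 0 < j) r -> map (nth 0 (x :: l)) r = map (nth 0 l) (map predn r).
  move=> /allP Hp; rewrite -map_comp; apply/eq_in_map => j /Hp /=.
  by case: j.
have Hgt : all (fun j => i < j) r.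
  by move: Hsp => /= /andP[].
have Hs' : sorted ltn (map predn r).
  have Hr : pairwise ltn r by move: Hsp => /= /andP[].
  move: Hr; rewrite !(sorted_pairwise ltn_trans) pairwise_map.
  apply: (sub_in_pairwise (P := fun j => i < j)) => //.
  move=> a b /= Ha1 Hb1 Hab. lia.
have Ha' : all (fun j => j < size l) (map predn r).
  rewrite all_map; apply/allP => j Hj /=.
  move: Ha Hgt => /allP Ha /allP Hg.
  have := Ha _ Hj; have := Hg _ Hj. lia.
case: i Hi Hs Hsp Hgt => [|i] Hi Hs Hsp Hgt.
  rewrite /= eqxx Hpos; first exact: IH.
  by apply: sub_all Hgt => j.
have -> : map (nth 0 (x :: l)) (i.+1 :: r) = map (nth 0 l) (map predn (i.+1 :: r)).
  by rewrite /= Hpos //; apply: sub_all Hgt => j; lia.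
apply: (subseq_trans _ (subseq_cons l x)).
apply: IH.
  rewrite (sorted_pairwise ltn_trans) /=; apply/andP; split.
    rewrite all_map; apply: sub_all Hgt => j /=. lia.
  by move: Hs'; rewrite (sorted_pairwise ltn_trans).
rewrite /= Ha' andbT. simpl in Hi. lia.
Qed.

Lemma index_lt_cons (l r : seq nat) (x y : nat) :
  uniq l -> subseq (x :: r) l -> y \in r -> index x l < index y l.
Proof.
elim: l => [|z l IH] //= /andP[Hz Hu].
case: eqP => [->|Hne] Hsub Hy.
  have Hyl : y \in l by apply: (mem_subseq Hsub).
  rewrite eqxx; case: eqP => [Eyz|] //.
  by move: Hz; rewrite Eyz Hyl.
have Hxl : x \in l by apply: (mem_subseq Hsub); rewrite inE eqxx.
have Hyl : y \in l by apply: (mem_subseq Hsub); rewrite inE Hy orbT.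
have -> : (z == x) = false by apply/eqP => E; apply: Hne.
have -> : (z == y) = false by apply/eqP => E; move: Hz; rewrite E Hyl.
by rewrite ltnS IH.
Qed.

Lemma index_lt (l w : seq nat) (a b : nat) :
  uniq l -> subseq w l -> a < b -> b < size w ->
  index (nth 0 w a) l < index (nth 0 w b) l.
Proof.
move=> Hu Hs Hab Hb.
apply: (@index_lt_cons l (drop a.+1 w)) => //.
  rewrite -drop_nth; last lia.
  apply: subseq_trans Hs; exact: drop_subseq.
have -> : nth 0 w b = nth 0 (drop a.+1 w) (b - a.+1) by rewrite nth_drop subnKC.
apply: mem_nth; rewrite size_drop ltn_sub2r //; exact: leq_ltn_trans Hab Hb.
Qed.

Definition toSeq n (s : 'S_n) : seq nat := [seq val (s i) | i <- enum 'I_n].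

Lemma size_toSeq n (s : 'S_n) : size (toSeq s) = n.
Proof. by rewrite size_map size_enum_ord. Qed.

Lemma nth_toSeq n (s : 'S_n) (i : 'I_n) : nth 0 (toSeq s) i = s i.
Proof. by rewrite (nth_map i) ?size_enum_ord // nth_ord_enum. Qed.

Lemma uniq_toSeq n (s : 'S_n) : uniq (toSeq s).
Proof.
rewrite map_inj_uniq ?enum_uniq // => i j /val_inj; exact: perm_inj.
Qed.

Definition iso (w q : seq nat) := size w = size q /\
  forall a b : 'I_(size q), (nth 0 w a < nth 0 w b) = (nth 0 q a < nth 0 q b).

Lemma bridge n (s : 'S_n) q :
  contains_pattern s q <-> exists w, subseq w (toSeq s) /\ iso w q.
Proof.
split.
  move=> /existsP [f /forallP Hf].
  have Hab (a b : 'I_(size q)) : ((a < b) ==> (f a < f b)) && ((s (f a) < s (f b)) == (nth 0 q a < nth 0 q b)).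
    by have /forallP := Hf a; apply.
  pose idx := [seq val (f a) | a <- enum 'I_(size q)].
  exists [seq nth 0 (toSeq s) i | i <- idx]; split.
    apply: subseq_nth_idx.
      rewrite (sorted_pairwise ltn_trans) /idx pairwise_map.
      apply: (@sub_pairwise _ (relpre val ltn)).
        by move=> a b /= H; have /andP[/implyP H1 _] := Hab a b; apply: H1.
      by rewrite -pairwise_map val_enum_ord -(sorted_pairwise ltn_trans) iota_ltn_sorted.
    by rewrite /idx all_map; apply/allP => a _ /=; rewrite size_toSeq.
  split; first by rewrite /idx !size_map -enumT size_enum_ord.
  move=> a b.
  have E (c : 'I_(size q)) : nth 0 [seq nth 0 (toSeq s) i | i <- idx] c = s (f c).
    by rewrite /idx -map_comp (nth_map c) ?size_enum_ord // nth_ord_enum /= nth_toSeq.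
  by rewrite !E; have /andP[_ /eqP] := Hab a b.
move=> [w [Hsub [Hsz Hiso]]].
have Hin (a : 'I_(size q)) : index (nth 0 w a) (toSeq s) < n.
  rewrite -[X in _ < X](size_toSeq s) index_mem; apply: (mem_subseq Hsub).
  by apply: mem_nth; rewrite Hsz.
have Hval (a : 'I_(size q)) : val (s (Ordinal (Hin a))) = nth 0 w a.
  transitivity (nth 0 (toSeq s) (Ordinal (Hin a))); first by rewrite nth_toSeq.
  by rewrite /= nth_index //; apply: (mem_subseq Hsub); apply: mem_nth; rewrite Hsz.
rewrite /contains_pattern; apply/existsP; exists [ffun a => Ordinal (Hin a)].
apply/forallP => a; apply/forallP => b; rewrite !ffunE; apply/andP; split.
  apply/implyP => Hab /=.
  apply: index_lt => //; first exact: uniq_toSeq.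
  by rewrite Hsz.
by rewrite !Hval Hiso.
Qed.

Definition c123 (l : seq nat) := exists a b c, subseq [:: a; b; c] l /\ a < b /\ b < c.
Definition c2143 (l : seq nat) :=
  exists a b c d, subseq [:: a; b; c; d] l /\ b < a /\ a < d /\ d < c.
Definition c3214 (l : seq nat) :=
  exists a b c d, subseq [:: a; b; c; d] l /\ c < b /\ b < a /\ a < d.

Ltac ordcases x := case: x => [[|[|[|[|?]]]] ?] //=.

Lemma cont123 l : (exists w, subseq w l /\ iso w [:: 1; 2; 3]) <-> c123 l.
Proof.
split.
  move=> [w [Hs [Hsz Hi]]].
  case: w Hs Hsz Hi => [|a [|b [|c [|? ?]]]] // Hs _ Hi.
  have := Hi (@Ordinal 3 0 isT) (@Ordinal 3 1 isT).
  have := Hi (@Ordinal 3 1 isT) (@Ordinal 3 2 isT).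
  move=> /= H1 H2; exists a, b, c; split => //; lia.
move=> [a [b [c [Hs [H1 H2]]]]]; exists [:: a; b; c]; split => //; split => //.
move=> x y; ordcases x; ordcases y; lia.
Qed.

Lemma cont2143 l : (exists w, subseq w l /\ iso w [:: 2; 1; 4; 3]) <-> c2143 l.
Proof.
split.
  move=> [w [Hs [Hsz Hi]]].
  case: w Hs Hsz Hi => [|a [|b [|c [|d [|? ?]]]]] // Hs _ Hi.
  have := Hi (@Ordinal 4 1 isT) (@Ordinal 4 0 isT).
  have := Hi (@Ordinal 4 0 isT) (@Ordinal 4 3 isT).
  have := Hi (@Ordinal 4 3 isT) (@Ordinal 4 2 isT).
  move=> /= H1 H2 H3; exists a, b, c, d; split => //; lia.
move=> [a [b [c [d [Hs [H1 [H2 H3]]]]]]]; exists [:: a; b; c; d]; split => //; split => //.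
move=> x y; ordcases x; ordcases y; lia.
Qed.

Lemma cont3214 l : (exists w, subseq w l /\ iso w [:: 3; 2; 1; 4]) <-> c3214 l.
Proof.
split.
  move=> [w [Hs [Hsz Hi]]].
  case: w Hs Hsz Hi => [|a [|b [|c [|d [|? ?]]]]] // Hs _ Hi.
  have := Hi (@Ordinal 4 2 isT) (@Ordinal 4 1 isT).
  have := Hi (@Ordinal 4 1 isT) (@Ordinal 4 0 isT).
  have := Hi (@Ordinal 4 0 isT) (@Ordinal 4 3 isT).
  move=> /= H1 H2 H3; exists a, b, c, d; split => //; lia.
move=> [a [b [c [d [Hs [H1 [H2 H3]]]]]]]; exists [:: a; b; c; d]; split => //; split => //.
move=> x y; ordcases x; ordcases y; lia.
Qed.

Definition Q n (l : seq nat) :=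
  perm_eq l (iota 0 n) /\ ~ c123 l /\ ~ c2143 l /\ ~ c3214 l.

Lemma perm_toSeq n (s : 'S_n) : perm_eq (toSeq s) (iota 0 n).
Proof.
apply: uniq_perm; rewrite ?iota_uniq ?uniq_toSeq // => y.
rewrite mem_iota add0n; apply/idP/idP.
  by move=> /mapP [i _ ->]; rewrite ltn_ord.
move=> Hy; apply/mapP; exists (s^-1 (Ordinal Hy))%g; first by rewrite mem_enum.
by rewrite permKV.
Qed.

Lemma inS n (s : 'S_n) : s \in S_123_2143_3214 n <-> Q n (toSeq s).
Proof.
rewrite inE /avoids; split.
  move=> /and3P [H1 H2 H3]; split; first exact: perm_toSeq.
  split; [move=> /cont123 /bridge H; by rewrite H in H1|].
  split; [move=> /cont2143 /bridge H; by rewrite H in H2|].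
  move=> /cont3214 /bridge H; by rewrite H in H3.
move=> [_ [H1 [H2 H3]]]; apply/and3P; split; apply/negP.
- by move=> /bridge /cont123.
- by move=> /bridge /cont2143.
- by move=> /bridge /cont3214.
Qed.

Definition av l := ~ c123 l /\ ~ c2143 l /\ ~ c3214 l.

Lemma av_sub l' l : subseq l' l -> av l -> av l'.
Proof.
move=> Hs [H1 [H2 H3]]; split; [|split].
- move=> [a [b [c [Hw Ho]]]]; apply: H1; exists a, b, c; split => //; exact: subseq_trans Hs.
- move=> [a [b [c [d [Hw Ho]]]]]; apply: H2; exists a, b, c, d; split => //; exact: subseq_trans Hs.
- move=> [a [b [c [d [Hw Ho]]]]]; apply: H3; exists a, b, c, d; split => //; exact: subseq_trans Hs.
Qed.

Lemma sub_small w t B : subseq w t -> (forall y, y \in t -> y < B) -> all (fun y => y < B) w.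
Proof. by move=> Hs Hb; apply/allP => y /(mem_subseq Hs) /Hb. Qed.

Lemma drop_head (a : nat) w M t : subseq (a :: w) (M :: t) ->
  (forall y, y \in t -> y < M) -> (exists2 z, z \in w & a < z) -> subseq (a :: w) t.
Proof.
rewrite /=; case: eqP => // -> Hs Hb [z Hz Hlt].
have := Hb z (mem_subseq Hs Hz); lia.
Qed.

Lemma drop_second a b w x M t : subseq (a :: b :: w) (x :: M :: t) ->
  (forall y, y \in t -> y < M) -> (exists2 z, z \in w & a < z /\ b < z) ->
  subseq (a :: b :: w) (x :: t).
Proof.
move=> Hs Hb [z Hz [Ha Hbz]].
move: Hs; rewrite [subseq _ (x :: _)]/=; case: eqP => [->|Hne] Hs.
  rewrite /= eqxx; apply: (drop_head Hs Hb); by exists z.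
apply: (subseq_trans _ (subseq_cons t x)).
apply: (drop_head Hs Hb); by exists z => //; rewrite inE Hz orbT.
Qed.

Lemma av_ins0 M t : (forall y, y \in t -> y < M) -> av t -> av (M :: t).
Proof.
move=> Hb [H1 [H2 H3]]; split; [|split].
- move=> [a [b [c [Hw Ho]]]]; apply: H1; exists a, b, c; split => //.
  apply: (drop_head Hw Hb); exists b; rewrite ?inE ?eqxx //; lia.
- move=> [a [b [c [d [Hw Ho]]]]]; apply: H2; exists a, b, c, d; split => //.
  apply: (drop_head Hw Hb); exists c; rewrite ?inE ?eqxx ?orbT //; lia.
- move=> [a [b [c [d [Hw Ho]]]]]; apply: H3; exists a, b, c, d; split => //.
  apply: (drop_head Hw Hb); exists d; rewrite ?inE ?eqxx ?orbT //; lia.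
Qed.

Lemma av_ins1 x M t : (forall y, y \in t -> y < M) -> av (x :: t) -> av (x :: M :: t).
Proof.
move=> Hb [H1 [H2 H3]]; split; [|split].
- move=> [a [b [c [Hw Ho]]]]; apply: H1; exists a, b, c; split => //.
  apply: (drop_second Hw Hb); exists c; rewrite ?inE ?eqxx //; lia.
- move=> [a [b [c [d [Hw Ho]]]]]; apply: H2; exists a, b, c, d; split => //.
  apply: (drop_second Hw Hb); exists c; rewrite ?inE ?eqxx ?orbT //; lia.
- move=> [a [b [c [d [Hw Ho]]]]]; apply: H3; exists a, b, c, d; split => //.
  apply: (drop_second Hw Hb); exists d; rewrite ?inE ?eqxx ?orbT //; lia.
Qed.

Lemma subseq_consE (a x : nat) w t : subseq (a :: w) (x :: t) = if a == x then subseq w t else subseq (a :: w) t.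
Proof. by rewrite /=; case: (a == x). Qed.
Ltac unf H := rewrite subseq_consE in H; case: eqP H => [?|?] H.

Ltac crush H Hb := first [ lia | (have := sub_small H Hb; rewrite /=; lia) | (unf H; [crush H Hb | crush H Hb]) ].

Lemma av_ins2 N M y t : y < N -> N < M -> (forall z, z \in t -> z < N) ->
  av (y :: t) -> av (N :: y :: M :: t).
Proof.
move=> HyN HNM Hb Hav.
have HbM : forall z, z \in t -> z < M by move=> z /Hb; lia.
have Hav1 := av_ins1 HbM Hav.
move: Hav1 => [H1 [H2 H3]]; split; [|split].
- move=> [a [b [c [Hw Ho]]]].
  move: Hw; rewrite subseq_consE; case: eqP => [Ea|Na] Hw; first by crush Hw Hb.
  by apply: H1; exists a, b, c.
- move=> [a [b [c [d [Hw Ho]]]]].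
  move: Hw; rewrite subseq_consE; case: eqP => [Ea|Na] Hw; first by crush Hw Hb.
  by apply: H2; exists a, b, c, d.
- move=> [a [b [c [d [Hw Ho]]]]].
  move: Hw; rewrite subseq_consE; case: eqP => [Ea|Na] Hw; first by crush Hw Hb.
  by apply: H3; exists a, b, c, d.
Qed.

Lemma perm_iotaS M t : perm_eq (M :: t) (iota 0 M.+1) = perm_eq t (iota 0 M).
Proof.
rewrite -addn1 iotaD add0n perm_sym perm_catC /= perm_cons.
by rewrite perm_sym.
Qed.

Lemma perm_swap2 (x M : nat) t : perm_eq (x :: M :: t) (M :: x :: t).
Proof. by rewrite (perm_catCA [:: x] [:: M] t). Qed.

Lemma perm_bound t k y : perm_eq t (iota 0 k) -> y \in t -> y < k.
Proof. by move=> /perm_mem ->; rewrite mem_iota. Qed.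

Definition ins1 (M : nat) (t : seq nat) := if t is x :: t' then x :: M :: t' else [::].
Definition ins2 (N M : nat) (t : seq nat) := if t is y :: t' then N :: y :: M :: t' else [::].

Fixpoint gen (n : nat) : seq (seq nat) :=
  match n with
  | 0 => [:: [::]]
  | n1.+1 =>
    match n1 with
    | 0 => [:: [:: 0]]
    | k.+1 => [seq n1 :: t | t <- gen n1] ++ [seq ins1 n1 t | t <- gen n1] ++
              (match k with 0 => [::] | _.+1 => [seq ins2 k n1 t | t <- gen k] end)
    end
  end.

Lemma av_small l : size l < 3 -> av l.
Proof.
move=> Hl; split; [|split].
- by move=> [a [b [c [/size_subseq Hw _]]]]; move: Hw Hl => /=; lia.
- by move=> [a [b [c [d [/size_subseq Hw _]]]]]; move: Hw Hl => /=; lia.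
- by move=> [a [b [c [d [/size_subseq Hw _]]]]]; move: Hw Hl => /=; lia.
Qed.

Definition gen3 k := match k with 0 => [::] | _.+1 => [seq ins2 k k.+1 t | t <- gen k] end.
Lemma genSS k : gen k.+2 = [seq k.+1 :: t | t <- gen k.+1] ++ [seq ins1 k.+1 t | t <- gen k.+1] ++ gen3 k.
Proof. by []. Qed.

Lemma subseq_cc (x : nat) s t : subseq s t -> subseq (x :: s) (x :: t).
Proof. by rewrite /= eqxx. Qed.

Lemma gen_char n : forall l, l \in gen n <-> perm_eq l (iota 0 n) /\ av l.
Proof.
elim/ltn_ind: n => n IH l.
case: n IH => [|[|k]] IH.
- rewrite inE; split.
    by move=> /eqP ->; split => //; apply: av_small.
  by move=> [/perm_size /= /size0nil -> _].
- rewrite inE; split.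
    by move=> /eqP ->; split => //; apply: av_small.
  move=> [Hp _]; have := perm_size Hp; case: l Hp => [|x [|? ?]] //= Hp _.
  by have := @perm_bound _ 1 _ Hp (mem_head x [::]); case: x {Hp}.
have IH1 := IH k.+1 (ltnSn _).
have IH0 := IH k (ltnW (ltnSn _)).
rewrite genSS !mem_cat; split.
  move=> /or3P [/mapP [t Ht ->]|/mapP [t Ht ->]|].
  - have [Hp Hav] := (IH1 t).1 Ht.
    split; first by rewrite perm_iotaS.
    by apply: av_ins0 => // y /(perm_bound Hp).
  - have [Hp Hav] := (IH1 t).1 Ht.
    case: t Ht Hp Hav => [|x t] Ht Hp Hav; first by have := perm_size Hp.
    split; first by rewrite (permPl (perm_swap2 _ _ _)) perm_iotaS.
    by apply: av_ins1 => // y Hy; apply: (perm_bound Hp); rewrite inE Hy orbT.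
  - case: k IH IH1 IH0 => [|k] // IH IH1 IH0 /mapP [t Ht ->].
    have [Hp Hav] := (IH0 t).1 Ht.
    case: t Ht Hp Hav => [|y t] Ht Hp Hav; first by have := perm_size Hp.
    split.
      by rewrite /= (perm_catCA [:: k.+1; y] [:: k.+2] t) /= !perm_iotaS.
    apply: av_ins2 => //.
      by apply: (perm_bound Hp); rewrite inE eqxx.
    by move=> z Hz; apply: (perm_bound Hp); rewrite inE Hz orbT.
move=> [Hp Hav].
have HM : k.+1 \in l by rewrite (perm_mem Hp) mem_iota; lia.
have Hu : uniq l by rewrite (perm_uniq Hp) iota_uniq.
have Hlt : forall z, z \in l -> z < k.+2 by move=> z; apply: perm_bound.
case: l Hp Hav HM Hu Hlt => [|x l1] // Hp Hav HM Hu Hlt.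
case: (eqVneq k.+1 x) => [Ex|Nx].
  apply/or3P; apply: Or31; apply/mapP; exists l1; last by rewrite Ex.
  apply/IH1; split; first by rewrite -(perm_iotaS k.+1) {1}Ex.
  by apply: av_sub Hav; exact: subseq_cons.
case: l1 Hp Hav HM Hu Hlt => [|y l2] Hp Hav HM Hu Hlt.
  by move: HM; rewrite inE (negbTE Nx).
case: (eqVneq k.+1 y) => [Ey|Ny].
  apply/or3P; apply: Or32; apply/mapP; exists (x :: l2); last by rewrite Ey.
  apply/IH1; split.
    by rewrite -(perm_iotaS k.+1) -(permPl (perm_swap2 x k.+1 l2)) {1}Ey.
  by apply: av_sub Hav; apply: subseq_cc; exact: subseq_cons.
case: l2 Hp Hav HM Hu Hlt => [|z l3] Hp Hav HM Hu Hlt.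
  by move: HM; rewrite !inE (negbTE Nx) (negbTE Ny).
move: Hu => /= /andP [Hx /andP [Hy /andP [Hz Hu3]]].
have Nxy : x != y by apply: contraNneq Hx => ->; rewrite mem_head.
have Nyz : y != z by apply: contraNneq Hy => ->; rewrite mem_head.
have Nxz : x != z by apply: contraNneq Hx => ->; rewrite !inE eqxx orbT.
have HxM : x < k.+1.
  have := Hlt x (mem_head _ _); move: Nx; rewrite eq_sym; lia.
have HyM : y < k.+1.
  have Hy0 : y \in [:: x, y, z & l3] by rewrite !inE eqxx orbT.
  have := Hlt y Hy0; move: Ny; rewrite eq_sym; lia.
case: (eqVneq k.+1 z) => [Ez|Nz].
  case: k IH IH1 IH0 Hp Hav HM Hlt Nx Ny Ez HxM HyM => [|k] IH IH1 IH0 Hp Hav HM Hlt Nx Ny Ez HxM HyM.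
    by have := perm_size Hp; rewrite size_iota.
  case: (ltngtP x y) => [Hxy|Hyx|Exy]; last by move: Nxy; rewrite Exy eqxx.
    exfalso; apply: Hav.1; exists x, y, k.+2; split => //.
    by rewrite -Ez; apply: subseq_cc; apply: subseq_cc; rewrite sub1seq mem_head.
  case: (eqVneq x k.+1) => [ExN|NxN].
    apply/or3P; apply: Or33; apply/mapP; exists (y :: l3); last by rewrite ExN -Ez.
    apply/IH0; split.
      move: Hp; rewrite ExN -Ez (perm_catCA [:: k.+1; y] [:: k.+2] l3) /=.
      by rewrite !perm_iotaS.
    by apply: av_sub Hav; apply: (subseq_trans _ (subseq_cons _ _)); apply: subseq_cc; exact: subseq_cons.
  exfalso; apply: Hav.2.1.
  have HN : k.+1 \in l3.
    have : k.+1 \in [:: x, y, z & l3] by rewrite (perm_mem Hp) mem_iota; lia.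
    rewrite !inE -Ez; move: NxN; rewrite eq_sym => /negbTE ->.
    have -> : (k.+1 == y) = false by apply/eqP; lia.
    have -> : (k.+1 == k.+2) = false by apply/eqP; lia.
    done.
  exists x, y, k.+2, k.+1; split; last by move: NxN; lia.
  rewrite -Ez; do 3 apply: subseq_cc; by rewrite sub1seq.
have HM3 : k.+1 \in l3 by move: HM; rewrite !inE (negbTE Nx) (negbTE Ny) (negbTE Nz).
have HzM : z < k.+1.
  have Hz0 : z \in [:: x, y, z & l3] by rewrite !inE eqxx !orbT.
  have := Hlt z Hz0; move: Nz; rewrite eq_sym; lia.
exfalso.
case: (ltngtP x y) => [Hxy|Hyx|Exy]; last by move: Nxy; rewrite Exy eqxx.
  apply: Hav.1; exists x, y, k.+1; split => //.
  do 2 apply: subseq_cc; by rewrite sub1seq inE HM3 orbT.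
case: (ltngtP y z) => [Hyz|Hzy|Eyz]; last by move: Nyz; rewrite Eyz eqxx.
  apply: Hav.1; exists y, z, k.+1; split => //.
  apply: (subseq_trans _ (subseq_cons _ _)).
  do 2 apply: subseq_cc; by rewrite sub1seq.
apply: Hav.2.2; exists x, y, z, k.+1; split => //.
do 3 apply: subseq_cc; by rewrite sub1seq.
Qed.

Lemma size_gen n : size (gen n) = pseq n.
Proof.
elim/ltn_ind: n => [[|[|k]]] IH //.
rewrite genSS !size_cat !size_map IH //.
case: k IH => [|k] IH; first by [].
rewrite /gen3 size_map IH //.
have -> : pseq k.+3 = 2 * pseq k.+2 + pseq k.+1 by [].
by rewrite mul2n -addnn addnA.
Qed.

Lemma gen_uniq n : uniq (gen n).
Proof.
elim/ltn_ind: n => [[|[|k]]] IH //.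
have IH1 := IH k.+1 (ltnSn _).
rewrite genSS cat_uniq; apply/and3P; split.
- by rewrite map_inj_uniq // => ? ? [].
- apply/hasPn => l; rewrite mem_cat => /orP [/mapP [t Ht ->]|HC]; apply/negP => /mapP [t' Ht' E].
    have [Hp _] := (gen_char _ t).1 Ht.
    case: t Ht Hp E => [|x t] Ht Hp //= [Ex _].
    by have := perm_bound Hp (mem_head x t); rewrite Ex ltnn.
  case: k IH IH1 HC Ht' E => [|k] IH IH1 //= /mapP [t Ht ->] Ht' E.
  case: t Ht E => [|y t] Ht //= [E1 _]; lia.
rewrite cat_uniq; apply/and3P; split.
- rewrite map_inj_uniq // => t1 t2.
  by case: t1 => [|x1 t1]; case: t2 => [|x2 t2] //= [-> ->].
- case: k IH IH1 => [|k] IH IH1 //.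
  apply/hasPn => l /mapP [t Ht ->]; apply/negP => /mapP [t' Ht' E].
  have [Hp _] := (gen_char _ t).1 Ht.
  case: t Ht Hp E => [|y t] Ht Hp //=.
  case: t' Ht' => [|x t'] Ht' //= [_ Ey _].
  by have := perm_bound Hp (mem_head y t); rewrite Ey; lia.
case: k IH IH1 => [|k] IH IH1 //.
rewrite /gen3 map_inj_uniq; first by apply: IH; lia.
move=> t1 t2.
by case: t1 => [|x1 t1]; case: t2 => [|x2 t2] //= [-> ->].
Qed.

Lemma toSeq_inj n : injective (@toSeq n).
Proof.
move=> s1 s2 E; apply/permP => i; apply/val_inj.
by rewrite /= -!nth_toSeq E.
Qed.

Lemma toSeq_surj n l : perm_eq l (iota 0 n) -> exists s : 'S_n, toSeq s = l.
Proof.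
move=> Hp.
have Hsz : size l = n by rewrite (perm_size Hp) size_iota.
have Hu : uniq l by rewrite (perm_uniq Hp) iota_uniq.
have Hlt (i : 'I_n) : nth 0 l i < n.
  by apply: (perm_bound Hp); apply: mem_nth; rewrite Hsz.
have Hinj : injective (fun i : 'I_n => Ordinal (Hlt i)).
  move=> i j /(congr1 val) /= E; apply/val_inj => /=.
  by move/eqP: E; rewrite nth_uniq ?Hsz // => /eqP.
exists (perm Hinj).
rewrite /toSeq.
have -> : [seq val (perm Hinj i) | i <- enum 'I_n] = [seq nth 0 l (val i) | i <- enum 'I_n].
  by apply: eq_map => i; rewrite permE.
by rewrite (map_comp (nth 0 l) val) val_enum_ord -Hsz -/(mkseq _ _) mkseq_nth.
Qed.

Theorem mainTheorem6 (n : nat) : #|S_123_2143_3214 n| = pseq n.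
Proof.
rewrite -size_gen cardE -(size_map (@toSeq n)).
apply: perm_size; apply: uniq_perm.
- by rewrite map_inj_uniq ?enum_uniq //; exact: toSeq_inj.
- exact: gen_uniq.
move=> l; apply/idP/idP.
  move=> /mapP [s]; rewrite mem_enum => /inS [Hp [H1 [H2 H3]]] ->.
  by apply/gen_char.
move=> /gen_char [Hp Hav].
have [s Es] := toSeq_surj Hp.
apply/mapP; exists s => //; rewrite mem_enum; apply/inS; rewrite Es.
by case: Hav => H1 [H2 H3].
Qed.
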